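(* Let $G$ be a sub-$2$-permutable graph. Then $\chi_i(G\,\square\,K_2)=\Delta(G\,\square\,K_2)+1$.
   Context: All graphs are finite and simple. $K^-_{2n}$ is the complete graph on $2n$ vertices with a perfect matching removed. A homomorphism $f:G\to H$ is a map $V(G)\to V(H)$ with $f(u)f(v)\in E(H)$ whenever $uv\in E(G)$; it is locally injective if for every vertex $v$, $f$ is injective on $N(v)$. A graph $G$ (not necessarily regular) is sub-$2$-permutable if it admits a locally injective homomorphism to $K^-_{\Delta(G)+2}$ (in particular $\Delta(G)$ is even). An incidence of $G$ is a pair $(v,e)$ with $v\in e\in E(G)$; incidences $(v,e),(u,f)$ are adjacent if $v=u$, or $e=f$, or $vu\in\{e,f\}$; an incidence coloring gives adjacent incidences distinct colors; $\chi_i(G)$ is the least number of colors of an incidence coloring. $\Delta$ denotes maximum degree. $G\,\square\,H$ is the Cartesian product: vertex set $V(G)\times V(H)$, $(u,v)\sim(u',v')$ iff ($uu'\in E(G)$, $v=v'$) or ($u=u'$, $vv'\in E(H)$). *)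

(* Defs.v *)
From mathcomp Require Import all_boot.
Set Implicit Arguments. Unset Strict Implicit. Unset Printing Implicit Defensive.

Definition simple_graph (T : finType) (e : rel T) : Prop :=
  symmetric e /\ irreflexive e.

Definition maxdeg (T : finType) (e : rel T) : nat :=
  \max_(v : T) #|[set u | e v u]|.

(* K^-_m : vertices 'I_m, the removed perfect matching pairs 2k with 2k+1;
   i ~ j iff i and j are in different matching pairs (only used for m even). *)
Definition Kminus (m : nat) : rel 'I_m := fun i j => i./2 != j./2.

Definition K2 : rel bool := fun a b => a != b.

Definition box (T1 T2 : finType) (e1 : rel T1) (e2 : rel T2) : rel (T1 * T2) :=
  fun x y => (e1 x.1 y.1 && (x.2 == y.2)) || ((x.1 == y.1) && e2 x.2 y.2).

Definition graph_hom (T1 T2 : finType) (e1 : rel T1) (e2 : rel T2) (f : T1 -> T2) : Prop :=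
  forall u v, e1 u v -> e2 (f u) (f v).

Definition locally_injective (T1 T2 : finType) (e1 : rel T1) (f : T1 -> T2) : Prop :=
  forall v, {in [pred u | e1 v u] &, injective f}.

Definition sub2permutable (T : finType) (e : rel T) : Prop :=
  ~~ odd (maxdeg e) /\
  exists f : T -> 'I_(maxdeg e + 2),
    graph_hom e (@Kminus (maxdeg e + 2)) f /\ locally_injective e f.

(* An incidence (v, vw) is encoded by the arc (v, w) with vw an edge. *)
Notation incidence e := {p | e p.1 p.2}.

Definition same_edge (T : finType) (v w u x : T) : bool :=
  ((v == u) && (w == x)) || ((v == x) && (w == u)).

(* (v,e),(u,f) with e = vw, f = ux are adjacent iff they are distinct and
   v = u, or e = f, or vu = e (i.e. u = w), or vu = f (i.e. v = x). *)
Definition inc_adj (T : finType) (e : rel T) (a b : incidence e) : bool :=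
  (a != b) &&
  (let: (v, w) := val a in let: (u, x) := val b in
   [|| v == u, same_edge v w u x, same_edge v u v w | same_edge v u u x]).

Definition inc_colorable (T : finType) (e : rel T) (k : nat) : bool :=
  [exists c : {ffun incidence e -> 'I_k},
     [forall a, forall b, inc_adj a b ==> (c a != c b)]].

Lemma inc_colorable_ex (T : finType) (e : rel T) : exists k, inc_colorable e k.
Proof.
exists #|{: incidence e}|; apply/existsP; exists [ffun a => enum_rank a].
apply/forallP=> a; apply/forallP=> b; apply/implyP=> /andP[nab _].
by rewrite !ffunE; apply: contra nab => /eqP/enum_rank_inj ->.
Qed.

Definition inc_chrom (T : finType) (e : rel T) : nat := ex_minn (inc_colorable_ex e).

(* Main.v *)
Require Import Defs.
From mathcomp Require Import all_boot zify.
Set Implicit Arguments. Unset Strict Implicit. Unset Printing Implicit Defensive.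

Lemma upper_col (T : finType) (e : rel T) k (m : T -> 'I_k) :
  irreflexive e -> (forall u v, e u v -> m u != m v) ->
  (forall v u w, e v u -> e v w -> u != w -> m u != m w) -> inc_colorable e k.
Proof.
move=> irr Hp Hd; apply/existsP; exists [ffun a : incidence e => m (val a).2].
apply/forallP => -[[v w] hvw]; apply/forallP => -[[u x] hux].
apply/implyP => /andP[neq /=]; rewrite !ffunE /=.
have neq' : (v, w) != (u, x) by apply: contra neq => /eqP H; apply/eqP/val_inj.
clear neq.
case/or4P.
- move/eqP => vu; subst u; apply: (Hd v) => //; apply: contra neq' => /eqP ->; by [].
- case/orP => /andP[/eqP vx /eqP wu]; subst.
  + by rewrite eqxx in neq'.
  + by rewrite eq_sym; apply: Hp.
- case/orP => /andP[/eqP a /eqP b]; subst.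
  + by apply: Hp.
  + by rewrite irr in hvw.
- case/orP => /andP[/eqP a /eqP b]; subst.
  + by rewrite irr in hux.
  + by rewrite eq_sym; apply: Hp.
Qed.

Lemma lower_col (T : finType) (e : rel T) z k :
  irreflexive e -> symmetric e -> 0 < #|[set u | e z u]| ->
  inc_colorable e k -> #|[set u | e z u]| < k.
Proof.
move=> irr sym Hn /existsP[c /forallP Hc].
have adj a b : inc_adj a b -> c a != c b by move=> h; exact: (implyP (forallP (Hc a) b) h).
case/card_gt0P: Hn => w0; rewrite inE => zw0.
have ez0 : e w0 z by rewrite sym.
pose a0 : incidence e := exist _ (w0, z) ez0.
pose Sout := [set a : incidence e | (val a).1 == z].
have cardS : #|Sout| = #|[set u | e z u]|.
  rewrite -(card_in_imset (f := fun a : incidence e => (val a).2) (D := Sout)).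
    apply: eq_card => u; rewrite inE; apply/imsetP/idP.
      case=> -[[v w] h]; rewrite inE /= => /eqP vz ->. by rewrite -vz.
    by move=> h; exists (exist _ (z, u) h); rewrite ?inE.
  move=> [[v w] h] [[v' w'] h']; rewrite !inE /= => /eqP vz /eqP vz' wE.
  by apply: val_inj => /=; rewrite wE vz vz'.
have a0S : a0 \notin Sout.
  rewrite inE /=; apply/negP => /eqP E; move: (ez0); by rewrite E irr.
have cinj : {in a0 |: Sout &, injective c}.
  move=> a b Ha Hb cab; apply/eqP; apply/negPn/negP => nab.
  have : inc_adj a b.
    rewrite /inc_adj nab /=.
    move: Ha Hb; rewrite !inE.
    case: a nab cab => [[v w] h]; case: b => [[u x] h'] /= nab cab.
    case/orP => [/eqP[-> ->]|/eqP->]; case/orP => [/eqP[-> ->]|/eqP->] //=.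
    - by rewrite eqxx.
    - by rewrite /same_edge !eqxx /= !orbT.
    - by rewrite /same_edge !eqxx /= !orbT.
    - by rewrite eqxx.
  by move/adj; rewrite cab eqxx.
have := max_card (c @: (a0 |: Sout)).
by rewrite card_in_imset // cardsU1 a0S cardS card_ord.
Qed.

Lemma mem_layer (T : finType) (A : {set T}) (b : bool) u c :
  ((u, c) \in [set (x, b) | x in A]) = (c == b) && (u \in A).
Proof.
apply/imsetP/andP => [[x xA [-> ->]]|[/eqP -> uA]]; last by exists u.
by rewrite eqxx.
Qed.

Lemma deg_box (T : finType) (e : rel T) v b :
  #|[set y | box e K2 (v, b) y]| = #|[set u | e v u]|.+1.
Proof.
have -> : [set y | box e K2 (v, b) y] = (v, ~~ b) |: [set (u, b) | u in [set u | e v u]].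
  apply/setP => -[u c]; rewrite !inE mem_layer inE /box /K2 /=.
  by case: b; case: c; rewrite /= xpair_eqE /= ?andbT ?andbF ?orbF // eq_sym.
rewrite cardsU1 mem_layer card_imset; last by move=> x y [].
by case: b.
Qed.

Lemma maxdeg_box (T : finType) (e : rel T) (x0 : T) :
  maxdeg (box e K2) = (maxdeg e).+1.
Proof.
apply/eqP; rewrite eqn_leq; apply/andP; split.
  apply/bigmax_leqP => -[v b] _; rewrite deg_box ltnS.
  exact: (leq_bigmax (F := fun v => #|[set u | e v u]|)).
have hT : 0 < #|T| by apply/card_gt0P; exists x0.
have [v Hv] := @eq_bigmax T (fun v => #|[set u | e v u]|) hT.
rewrite /maxdeg Hv -(deg_box e v true).
exact: (leq_bigmax (F := fun y => #|[set z | box e K2 y z]|) (v, true)).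
Qed.

Definition pt (i : nat) : nat := i./2.*2 + ~~ odd i.
Definition qq (b : bool) (i : nat) : nat := if b then i else pt i.

Lemma half_pt i : (pt i)./2 = i./2.
Proof. by rewrite /pt addnC half_bit_double. Qed.

Lemma odd_pt i : odd (pt i) = ~~ odd i.
Proof. by rewrite /pt oddD odd_double oddb. Qed.

Lemma half_qq b i : (qq b i)./2 = i./2.
Proof. by case: b => //=; rewrite half_pt. Qed.

Lemma odd_qq b i : odd (qq b i) = (if b then odd i else ~~ odd i).
Proof. by case: b => //=; rewrite odd_pt. Qed.

Lemma qq_inj b i j : qq b i = qq b j -> i = j.
Proof.
move=> h.
have hh : i./2 = j./2 by rewrite -(half_qq b i) h half_qq.
have ho : odd i = odd j.
  by have := congr1 odd h; rewrite !odd_qq; case: b {h} => //; case: (odd i); case: (odd j).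
by rewrite -(odd_double_half i) hh ho odd_double_half.
Qed.

Lemma qq_neq b b' i : b != b' -> qq b i != qq b' i.
Proof.
move=> nb; apply/negP => /eqP /(congr1 odd); rewrite !odd_qq.
by case: b b' nb => -[] //= _; case: (odd i).
Qed.

Lemma qq_half b b' i j : i./2 != j./2 -> qq b i != qq b' j.
Proof. by move=> h; apply: contra h => /eqP E; rewrite -(half_qq b) E half_qq. Qed.

Lemma qq_lt b i n : i < n -> ~~ odd n -> qq b i < n.
Proof.
case: b => //= H1 H2; rewrite /pt.
have:= odd_double_half i. have := odd_double_half n. move: H2.
case: (odd n); case: (odd i) => //=; lia.
Qed.

Theorem mainTheorem9 (T : finType) (e : rel T) (x0 : T) :
  simple_graph e -> sub2permutable e ->
  inc_chrom (box e K2) = maxdeg (box e K2) + 1.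
Proof.
move=> [sym irr] [ev [f [hom inj]]].
have irrB : irreflexive (box e K2).
  by move=> [v b]; rewrite /box /K2 /= (irr v) /= !eqxx.
have symB : symmetric (box e K2).
  by move=> [v b] [u c]; rewrite /box /K2 /= sym (eq_sym v) (eq_sym b).
pose N := maxdeg e + 2.
have oN : ~~ odd N by rewrite /N oddD addbF.
pose m (y : T * bool) : 'I_N := insubd (f y.1) (qq y.2 (f y.1)).
have valm y : val (m y) = qq y.2 (f y.1).
  by rewrite /m val_insubd qq_lt.
have mneq y z : val (m y) != val (m z) -> m y != m z.
  by apply: contra => /eqP ->.
have up : inc_colorable (box e K2) N.
  apply: (upper_col (m := m)) => //.
    move=> [u1 b1] [w1 b2]; rewrite /box /K2 /= => H; apply: mneq; rewrite !valm /=.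
    case/orP: H => /andP[h1 h2].
      by apply: qq_half; have := hom _ _ h1.
    by rewrite (eqP h1); apply: qq_neq.
  move=> [v b] [u1 b1] [w1 b2]; rewrite /box /K2 /= => H1 H2 nuw.
  apply: mneq; rewrite !valm /=.
  case/orP: H1 => /andP[h1 h2]; case/orP: H2 => /andP[h3 h4].
  - rewrite -(eqP h2) -(eqP h4); apply: contra nuw => /eqP /qq_inj /val_inj E.
    by rewrite -(eqP h2) -(eqP h4) (inj v u1 w1) ?inE.
  - apply: qq_half; rewrite -(eqP h3) eq_sym; exact: hom.
  - apply: qq_half; rewrite -(eqP h1); exact: hom.
  - move: nuw; rewrite -(eqP h1) -(eqP h3).
    by move=> n; apply: qq_neq; apply: contra n => /eqP ->.
have hT : 0 < #|T| by apply/card_gt0P; exists x0.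
have [v Hv] := @eq_bigmax T (fun v => #|[set u | e v u]|) hT.
have Hv' : #|[set u | e v u]| = maxdeg e by rewrite /maxdeg Hv.
rewrite (maxdeg_box e x0) /inc_chrom; case: ex_minnP => n Hn Hmin.
have := Hmin _ up.
have := lower_col (z := (v, true)) irrB symB _ Hn; rewrite deg_box Hv' => /(_ isT).
rewrite /N; lia.
Qed.
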